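(* Let $N\ge1$ and $1\le\sigma_N\le CN^{1/2}$. Define $c_d=Z_N^{-1}e^{-d^2/4\sigma_N^2}$ if $N+d$ is even and $|d|\le\sigma_N^2$, and $c_d=0$ otherwise, with $Z_N>0$ such that $\sum_{|d|\le\sigma_N^2}|c_d|^2=1$. Then: (1) for every $n\in\mathbb N$ there is $C_n$ independent of $N$ and $\sigma_N$ with $\sum_{-\sigma_N^2\le d\le\sigma_N^2}d^{2n}|c_d|^2\le C_n\sigma_N^{2n}$, and $\sum_{-\sigma_N^2\le d\le\sigma_N^2}d^{2n+1}|c_d|^2=0$; (2) for every even integer $\kappa\in2\mathbb Z$ there is $C$ (depending on $\kappa$, not on $N,\sigma_N$) with $\Big|\sum_{-\sigma_N^2\le d\le\sigma_N^2-\kappa}c_dc_{d+\kappa}-1\Big|\le\frac{C}{\sigma_N^2}$.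
   Context: Here $d$ ranges over integers. *)

(* Defs.v *)
From HB Require Import structures.
From mathcomp Require Import all_boot all_order all_algebra.
From mathcomp Require Import all_classical all_reals all_analysis.
Set Implicit Arguments. Unset Strict Implicit. Unset Printing Implicit Defensive.
Import Order.TTheory GRing.Theory Num.Theory.
Local Open Scope ring_scope.

(* zsum a b F = \sum_{d = a}^{b} F d  over the integers a <= d <= b
   (empty sum, i.e. 0, when b < a). *)
Definition zsum {R : realType} (a b : int) (F : int -> R) : R :=
  \sum_(k < `|b - a|.+1 | a <= b) F (a + k%:Z).

(* floor(sigma^2): integer d satisfies -sigma^2 <= d <= sigma^2 iff |d| <= M *)
Definition Msig {R : realType} (s : R) : int := Num.floor (s ^+ 2).

Definition cw {R : realType} (N : nat) (s : R) (d : int) : R :=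
  if ((2 %| (N%:Z + d))%Z && ((`|d|%:~R : R) <= s ^+ 2))
  then expR (- ((d%:~R) ^+ 2) / (4 * s ^+ 2)) else 0.

Definition ZN {R : realType} (N : nat) (s : R) : R :=
  Num.sqrt (zsum (- Msig s) (Msig s) (fun d => `|cw N s d| ^+ 2)).

Definition cN {R : realType} (N : nat) (s : R) (d : int) : R :=
  (ZN N s)^-1 * cw N s d.

(* Main.v *)
Require Import Defs.
From HB Require Import structures.
From mathcomp Require Import all_boot all_order all_algebra.
From mathcomp Require Import all_classical all_reals all_analysis.
From mathcomp Require Import zify ring lra.
Import Order.TTheory GRing.Theory Num.Theory.
Local Open Scope ring_scope.

Definition ZS {R : realType} (L : nat) (F : int -> R) : R :=
  F 0 + \sum_(i < L) (F (i.+1)%:Z + F (- (i.+1)%:Z)).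

Lemma zsumE {R : realType} (a b : int) (F : int -> R) : a <= b ->
  zsum a b F = \sum_(k < (absz (b - a)).+1) F (a + k%:Z).
Proof. by move=> hab; rewrite /zsum; apply: eq_bigl => k; rewrite hab. Qed.

Lemma zsum_sym {R : realType} (m : nat) (F : int -> R) :
  zsum (- m%:Z) m%:Z F = ZS m F.
Proof.
elim: m F => [|m IH] F.
  rewrite zsumE // /ZS big_ord0 big_ord_recl /= big_ord0.
  by rewrite oppr0 !addr0.
rewrite zsumE; last by lia.
have -> : absz ((m.+1)%:Z - - (m.+1)%:Z) = (2 * m)%N.+2 by lia.
rewrite big_ord_recl big_ord_recr /=.
rewrite [in RHS]/ZS [in RHS]big_ord_recr /=.
have -> : \sum_(i < (2 * m)%N.+1) F (- (m.+1)%:Z + (bump 0 (widen_ord (leqnSn _) i))%:Z)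
   = zsum (- m%:Z) m%:Z F.
  rewrite zsumE; last by lia.
  have -> : absz (m%:Z - - m%:Z) = (2 * m)%N by lia.
  apply: eq_bigr => i _; congr F; rewrite /bump /=; lia.
rewrite IH /ZS.
have -> : (- (m.+1)%:Z + 0%:Z) = - (m.+1)%:Z by lia.
have -> : (- (m.+1)%:Z + (bump 0 (ord_max : 'I_(2 * m)%N.+2))%:Z) = (m.+1)%:Z by rewrite /bump /=; lia.
ring.
Qed.

Lemma ZS_ext {R : realType} (L L' : nat) (F : int -> R) :
  (forall d : int, L%:Z < `|d| -> F d = 0) -> (L <= L')%N -> ZS L' F = ZS L F.
Proof.
move=> hF /subnK <-; elim: (L' - L)%N => [|k IH]; first by rewrite add0n.
rewrite addSn /ZS big_ord_recr /= addrA -/(ZS _ F) IH.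
rewrite (hF (k + L).+1%:Z) ?(hF (- (k + L).+1%:Z)) ?addr0 //; rewrite -?abszE; lia.
Qed.

Lemma sum_ord_ext {R : realType} (n n' : nat) (G : nat -> R) :
  (forall k, (minn n n' <= k)%N -> G k = 0) ->
  \sum_(k < n) G k = \sum_(k < n') G k.
Proof.
wlog le : n n' / (n <= n')%N.
  move=> W hG; case: (leqP n n') => h; first exact: W.
  by symmetry; apply: W => [|k hk]; [exact: ltnW | apply: hG; rewrite minnC].
move=> hG; rewrite (big_ord_widen n' G le) big_mkcond /=.
apply: eq_bigr => k _; case: ifP => // /negbT; rewrite -leqNgt => hk.
by rewrite hG // (minn_idPl le).
Qed.

Lemma zsum_ext {R : realType} (a b b' : int) (F : int -> R) :
  a <= b' -> (forall d : int, a <= d -> b < d -> F d = 0) ->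
  (forall d : int, a <= d -> b' < d -> F d = 0) -> zsum a b F = zsum a b' F.
Proof.
move=> hab' hb hb'; case: (lerP a b) => hab.
  rewrite !zsumE //; apply: (@sum_ord_ext R _ _ (fun k : nat => F (a + k%:Z))).
  move=> k hk; case: (leqP (absz (b - a)).+1 (absz (b' - a)).+1) => hc.
    by apply: hb; lia.
  by apply: hb'; lia.
rewrite /zsum big_pred0; last by move=> k /=; rewrite leNgt hab.
apply: esym; apply: big1 => k _; rewrite hb //; lia.
Qed.

Lemma ZS_shift1 {R : realType} (L : nat) (F : int -> R) :
  F (L%:Z + 1) = 0 -> F (- L%:Z) = 0 -> ZS L (fun d => F (d + 1)) = ZS L F.
Proof.
move=> h1 h2; rewrite -!zsum_sym !zsumE; try lia.
have -> : absz (L%:Z - - L%:Z) = (2 * L)%N by lia.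
rewrite big_ord_recr big_ord_recl /=.
have -> : F (- L%:Z + (2 * L)%N%:Z + 1) = 0 by rewrite -h1; congr F; lia.
have -> : F (- L%:Z + 0%N%:Z) = 0 by rewrite -h2; congr F; lia.
rewrite addr0 add0r; apply: eq_bigr => i _; congr F; rewrite /bump /=; lia.
Qed.

Lemma ZS_eq {R : realType} (L : nat) (F G : int -> R) :
  (forall d, F d = G d) -> ZS L F = ZS L G.
Proof. by move=> h; rewrite /ZS; congr (_ + _); [|apply: eq_bigr => i _]; rewrite !h. Qed.

Lemma ZS_shift {R : realType} (L t : nat) (F : int -> R) :
  (forall d, L%:Z < d -> F d = 0) -> (forall d, d < - L%:Z + t%:Z -> F d = 0) ->
  ZS L (fun d => F (d + t%:Z)) = ZS L F.
Proof.
move=> h1; elim: t => [|t IH] h2.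
  by apply: ZS_eq => d; rewrite addr0.
rewrite -IH; last by move=> d hd; apply: h2; lia.
rewrite -(@ZS_shift1 R L (fun d => F (d + t%:Z))).
- by apply: ZS_eq => d; congr F; lia.
- by apply: h1; lia.
- by apply: h2; lia.
Qed.

Lemma ZS_neg {R : realType} (L : nat) (F : int -> R) :
  ZS L (fun d => F (- d)) = ZS L F.
Proof.
rewrite /ZS oppr0; congr (_ + _); apply: eq_bigr => i _; by rewrite opprK addrC.
Qed.

Lemma ZS_add {R : realType} (L : nat) (F G : int -> R) :
  ZS L (fun d => F d + G d) = ZS L F + ZS L G.
Proof.
rewrite /ZS.
have -> : \sum_(i < L) (F i.+1 + G i.+1 + (F (- i.+1%:Z) + G (- i.+1%:Z))) =
  \sum_(i < L) (F i.+1 + F (- i.+1%:Z)) + \sum_(i < L) (G i.+1 + G (- i.+1%:Z)).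
  by rewrite -big_split /=; apply: eq_bigr => i _; ring.
ring.
Qed.

Lemma ZS_mulr {R : realType} (L : nat) (F : int -> R) (c : R) :
  ZS L (fun d => F d * c) = ZS L F * c.
Proof.
rewrite /ZS mulrDl big_distrl /=; congr (_ + _); apply: eq_bigr => i _; ring.
Qed.

Lemma ZS_le {R : realType} (L : nat) (F G : int -> R) :
  (forall d, F d <= G d) -> ZS L F <= ZS L G.
Proof.
move=> h; rewrite /ZS lerD //; apply: ler_sum => i _; exact: lerD.
Qed.

Lemma ZS_const {R : realType} (L : nat) (c : R) :
  ZS L (fun _ => c) = (2 * L + 1)%N%:R * c.
Proof.
elim: L => [|L IH]; first by rewrite /ZS big_ord0 addr0 mul1r.
rewrite /ZS big_ord_recr /= addrA -/(ZS L (fun _ => c)) IH.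
rewrite (_ : (2 * L.+1 + 1 = (2 * L + 1) + 2)%N); last by lia.
rewrite natrD; ring.
Qed.

Definition inS {R : realType} (N : nat) (s : R) (d : int) : bool :=
  (2 %| (N%:Z + d))%Z && ((`|d|%:~R : R) <= s ^+ 2).

Definition gs {R : realType} (s x : R) : R := expR (- x ^+ 2 / (2 * s ^+ 2)).

Lemma cwE {R : realType} N (s : R) d :
  cw N s d = if inS N s d then expR (- ((d%:~R) ^+ 2) / (4 * s ^+ 2)) else 0.
Proof. by []. Qed.

Lemma cw_ge0 {R : realType} N (s : R) d : 0 <= cw N s d.
Proof. rewrite cwE; case: ifP => _ //; exact: expR_ge0. Qed.

Lemma cw_sq {R : realType} N (s : R) d : 0 < s ->
  cw N s d ^+ 2 = if inS N s d then gs s d%:~R else 0.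
Proof.
move=> s0; rewrite cwE; case: ifP => _; last by rewrite expr0n.
by rewrite /gs expr2 -expRD; congr expR; field; rewrite gt_eqF.
Qed.

Lemma inS_neg {R : realType} N (s : R) d : inS N s (- d) = inS N s d.
Proof.
rewrite /inS normrN; congr (_ && _).
apply/idP/idP => h; lia.
Qed.

Lemma cw_neg {R : realType} N (s : R) d : cw N s (- d) = cw N s d.
Proof. by rewrite !cwE inS_neg intrN sqrrN. Qed.

Lemma Msig_ge0 {R : realType} (s : R) : 0 <= Msig s.
Proof. by rewrite /Msig floor_ge0 sqr_ge0. Qed.

Lemma inS_le {R : realType} N (s : R) d : inS N s d -> `|d| <= Msig s.
Proof. by case/andP => _ h; rewrite /Msig floor_ge_int. Qed.

Lemma cw_out {R : realType} N (s : R) d : Msig s < `|d| -> cw N s d = 0.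
Proof.
move=> h; rewrite cwE; case: ifP => // /inS_le h'.
by move: (lt_le_trans h h'); rewrite ltxx.
Qed.

Definition Ew {R : realType} N (s : R) := ZS (absz (Msig s)) (fun d => cw N s d ^+ 2).

Lemma Msig_abs {R : realType} (s : R) : (absz (Msig s))%:Z = Msig s.
Proof. by rewrite gez0_abs // Msig_ge0. Qed.

Lemma pair_sum {R : realType} (G : nat -> R) p :
  \sum_(i < (2 * p)%N) G i = \sum_(i < p) (G (2 * i)%N + G (2 * i).+1).
Proof.
elim: p => [|p IH]; first by rewrite !big_ord0.
rewrite (_ : (2 * p.+1 = (2 * p).+2)%N); last by lia.
rewrite [RHS]big_ord_recr /= -IH big_ord_recr big_ord_recr /=.
by rewrite addrA.
Qed.

Lemma cw_lb_small {R : realType} N (s : R) (k : nat) : 1 <= s ->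
  k%:R <= s -> (2 %| (N%:Z + k%:Z))%Z -> 1 / 2 <= cw N s k%:Z ^+ 2.
Proof.
move=> s1 ks hk; rewrite cwE.
have -> : inS N s k%:Z.
  rewrite /inS hk /= -pmulrn /=.
  apply: (le_trans ks); rewrite expr2 ler_peMl //; lra.
have k0 : 0 <= (k%:R : R) by [].
have h : 3 / 4 <= expR (- ((k%:Z)%:~R : R) ^+ 2 / (4 * s ^+ 2)).
  apply: le_trans (expR_ge1Dx _); rewrite -pmulrn.
  have s0 : 0 < s by lra.
  have : (k%:R : R) ^+ 2 <= s ^+ 2 by nra.
  move=> hks.
  have : (k%:R : R) ^+ 2 / (4 * s ^+ 2) <= 1 / 4.
    rewrite ler_pdivrMr; last by rewrite mulr_gt0 // exprn_gt0.
    lra.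
  lra.
nra.
Qed.

Lemma E_lb {R : realType} N (s : R) : 1 <= s -> s / 6 <= Ew N s.
Proof.
move=> s1.
set m := absz (Msig s).
set G := fun k : nat => cw N s k%:Z ^+ 2.
have G0 : forall k, 0 <= G k by move=> k; rewrite /G sqr_ge0.
have h1 : \sum_(i < m.+1) G i <= Ew N s.
  rewrite /Ew /ZS big_ord_recl; apply: lerD => //=.
  apply: ler_sum => i _; rewrite lerDl; exact: sqr_ge0.
set p := absz (Num.floor ((s + 1) / 2)).
have fl0 : 0 <= Num.floor ((s + 1) / 2).
  by rewrite floor_ge0; lra.
have pE : (p%:R : R) = (Num.floor ((s + 1) / 2))%:~R.
  by rewrite /p natr_absz ger0_norm.
have hp1 : 1 <= (p%:R : R).
  rewrite pE; have h : (1 : int) <= Num.floor ((s + 1) / 2).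
    by rewrite floor_ge_int; lra.
  by move: h; rewrite -(ler_int R).
have hp2 : (p%:R : R) <= (s + 1) / 2 by rewrite pE floor_le.
have hp3 : (s + 1) / 2 - 1 < p%:R.
  by rewrite pE; move: (floorD1_gt ((s + 1) / 2)); rewrite intrD; lra.
have hp4 : (2 * p <= m.+1)%N.
  have : (2 * p%:Z - 1 <= Msig s).
    rewrite /Msig floor_ge_int intrD intrM /=.
    have pz : ((p%:Z)%:~R : R) = p%:R by rewrite -pmulrn.
    have e2 : (2%:~R : R) = 2 by [].
    have e1 : ((-1)%:~R : R) = -1 by [].
    rewrite pz e2 e1.
    have : s <= s ^+ 2 by rewrite expr2 ler_peMl //; lra.
    lra.
  rewrite -Msig_abs -/m; lia.
have h2 : \sum_(i < (2 * p)%N) G i <= \sum_(i < m.+1) G i.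
  rewrite (big_ord_widen m.+1 G hp4) [X in X <= _]big_mkcond /=.
  apply: ler_sum => i _; case: ifP => _ //.
have h3 : (p%:R : R) / 2 <= \sum_(i < (2 * p)%N) G i.
  rewrite pair_sum.
  have -> : (p%:R : R) / 2 = \sum_(i < p) (1 / 2) by rewrite sumr_const card_ord -mulr_natr; ring.
  apply: ler_sum => i _.
  have hi : (2 * i + 1 <= 2 * p - 1)%N by have := ltn_ord i; lia.
  have hi' : ((2 * i).+1%:R : R) <= s.
    have : ((2 * i + 1)%N%:R : R) <= (2 * p - 1)%N%:R by rewrite ler_nat.
    rewrite natrB; last by lia.
    rewrite addn1 natrM /=; lra.
  have hi'' : ((2 * i)%N%:R : R) <= s.
    by apply: le_trans hi'; rewrite ler_nat.
  have : (2 %| (N%:Z + (2 * i)%N%:Z))%Z || (2 %| (N%:Z + (2 * i).+1%:Z))%Z by lia.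
  case/orP => hd.
    have h' : 1 / 2 <= G (2 * i)%N := @cw_lb_small R N s _ s1 hi'' hd.
    have := G0 (2 * i).+1; lra.
  have h' : 1 / 2 <= G (2 * i).+1 := @cw_lb_small R N s _ s1 hi' hd.
  have := G0 (2 * i)%N; lra.
lra.
Qed.

Lemma Ew_ge0 {R : realType} N (s : R) : 0 <= Ew N s.
Proof.
rewrite /Ew /ZS addr_ge0 ?sqr_ge0 //; apply: sumr_ge0 => i _.
by rewrite addr_ge0 ?sqr_ge0.
Qed.

Lemma ZN_E {R : realType} N (s : R) : ZN N s = Num.sqrt (Ew N s).
Proof.
rewrite /ZN -Msig_abs zsum_sym /Ew; congr Num.sqrt; apply: ZS_eq => d.
by rewrite ger0_norm // cw_ge0.
Qed.

Lemma cN_mul {R : realType} N (s : R) d d' : 1 <= s ->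
  cN N s d * cN N s d' = cw N s d * cw N s d' / Ew N s.
Proof.
move=> s1; have E0 : 0 < Ew N s by have := @E_lb R N s s1; lra.
rewrite /cN ZN_E.
have h : Num.sqrt (Ew N s) ^+ 2 = Ew N s by rewrite sqr_sqrtr // ltW.
have h0 : Num.sqrt (Ew N s) != 0 by rewrite gt_eqF // sqrtr_gt0.
by rewrite -[in RHS]h; field.
Qed.

Lemma cN_sq {R : realType} N (s : R) d : 1 <= s ->
  `|cN N s d| ^+ 2 = cw N s d ^+ 2 / Ew N s.
Proof.
move=> s1; rewrite real_normK ?num_real // expr2 cN_mul //; by rewrite expr2.
Qed.

Lemma geo_eq {R : realType} (q : R) m :
  (\sum_(i < m) q ^+ i.+1) * (1 - q) = q - q ^+ m.+1.
Proof.
elim: m => [|m IH]; first by rewrite big_ord0 expr1; ring.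
by rewrite big_ord_recr /= mulrDl IH !exprS; ring.
Qed.

Lemma geo_le {R : realType} (s : R) m : 1 <= s ->
  \sum_(i < m) expR (- ((i.+1)%:R / s)) <= s.
Proof.
move=> s1.
set q := expR (- (1 / s)).
have -> : \sum_(i < m) expR (- ((i.+1)%:R / s)) = \sum_(i < m) q ^+ i.+1.
  apply: eq_bigr => i _; rewrite /q -expRM_natl; congr expR; rewrite mulrN; congr (- _).
  by rewrite mulrA mulr1.
have q0 : 0 < q by exact: expR_gt0.
set e := expR (1 / s).
have qe : q * e = 1 by rewrite /q /e expRN mulVf // gt_eqF // expR_gt0.
have he : 1 + 1 / s <= e by exact: expR_ge1Dx.
have t1 : s * (1 / s) = 1 by rewrite mul1r mulfV // gt_eqF //; lra.
have h1 : q * (1 + 1 / s) <= 1.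
  rewrite -[X in _ <= X]qe; nra.
have h2 : q * (s + 1) <= s.
  have : s * (q * (1 + 1 / s)) <= s * 1 by nra.
  have -> : s * (q * (1 + 1 / s)) = q * s + q * (s * (1 / s)) by ring.
  rewrite t1; lra.
have hq1 : q < 1 by nra.
have hS := geo_eq q m.
have qm : 0 <= q ^+ m.+1 by rewrite exprn_ge0 // ltW.
set S := \sum_(i < m) q ^+ i.+1 in hS *.
have : S * (1 - q) <= q by lra.
nra.
Qed.

Lemma pow_le_fact_exp {R : realType} (x : R) (k : nat) : 0 <= x ->
  x ^+ k <= k`!%:R * expR x.
Proof.
move=> x0; case: k => [|k].
  by rewrite expr0 fact0 mul1r; have := expR_ge1Dx x; lra.
have h := expR_ge1Dxn k x0.
have f0 : 0 < (k.+1)`!%:R :> R by rewrite ltr0n fact_gt0.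
have : x ^+ k.+1 / (k.+1)`!%:R <= expR x by lra.
by rewrite ler_pdivrMr // mulrC.
Qed.

Lemma mom_pt {R : realType} N (s : R) (n : nat) (d : int) : 1 <= s ->
  (d%:~R : R) ^+ (2 * n) * cw N s d ^+ 2 <=
  (2 * n)`!%:R * s ^+ (2 * n) * (expR 4 * cw N s d ^+ 2 + expR (- (`|(d%:~R : R)| / s))).
Proof.
move=> s1; have s0 : 0 < s by lra.
set y : R := d%:~R.
set x := `|y| / s.
have x0 : 0 <= x by rewrite divr_ge0 //; lra.
have ys : `|y| = s * x by rewrite /x; field; rewrite gt_eqF.
have y2 : y ^+ 2 = s ^+ 2 * x ^+ 2 by rewrite -real_normK ?num_real // ys exprMn.
have hd : y ^+ (2 * n) = s ^+ (2 * n) * x ^+ (2 * n).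
  by rewrite !exprM y2 exprMn.
have hx := @pow_le_fact_exp R x (2 * n) x0.
set c := cw N s d ^+ 2.
have c0 : 0 <= c by rewrite /c sqr_ge0.
have hc : expR x * c <= expR 4 * c + expR (- x).
  rewrite /c cw_sq //; case: ifP => _; last first.
    by rewrite !mulr0 add0r expR_ge0.
  have -> : gs s y = expR (- (x ^+ 2) / 2).
    by rewrite /gs y2; congr expR; field; rewrite gt_eqF.
  case: (lerP x 4) => hx4.
    have : expR x <= expR 4 by rewrite ler_expR.
    have := expR_ge0 (- (x ^+ 2) / 2); have := expR_ge0 (- x); nra.
  rewrite -expRD.
  have : expR (x + - x ^+ 2 / 2) <= expR (- x) by rewrite ler_expR; nra.
  have := mulr_ge0 (expR_ge0 4) (expR_ge0 (- (x ^+ 2) / 2)); lra.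
rewrite hd.
have sp : 0 <= s ^+ (2 * n) by rewrite exprn_ge0 // ltW.
have fp : 0 <= (2 * n)`!%:R :> R by [].
apply: (le_trans (y := s ^+ (2 * n) * ((2 * n)`!%:R * expR x) * c)).
  by rewrite -!mulrA ler_wpM2l // mulrA ler_wpM2r.
have -> : s ^+ (2 * n) * ((2 * n)`!%:R * expR x) * c =
          (2 * n)`!%:R * s ^+ (2 * n) * (expR x * c) by ring.
by rewrite ler_wpM2l // mulr_ge0.
Qed.

Lemma G_le {R : realType} (s : R) m : 1 <= s ->
  ZS m (fun d : int => expR (- (`|(d%:~R : R)| / s))) <= 1 + 2 * s.
Proof.
move=> s1; rewrite /ZS /= normr0 mul0r oppr0 expR0 lerD2l.
have -> : \sum_(i < m) (expR (- (`|((i.+1)%:Z%:~R : R)| / s)) +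
                        expR (- (`|((- (i.+1)%:Z)%:~R : R)| / s))) =
          2 * \sum_(i < m) expR (- ((i.+1)%:R / s)).
  rewrite mulr_sumr; apply: eq_bigr => i _.
  rewrite intrN normrN -pmulrn ger0_norm //; ring.
have := @geo_le R s m s1; lra.
Qed.

Lemma part1 {R : realType} N (s : R) (n : nat) : 1 <= s ->
  zsum (- Msig s) (Msig s) (fun d => (d%:~R : R) ^+ (2 * n) * `|cN N s d| ^+ 2)
  <= ((2 * n)`!%:R * (expR 4 + 18)) * s ^+ (2 * n).
Proof.
move=> s1; have s0 : 0 < s by lra.
have hE := @E_lb R N s s1.
have E0 : 0 < Ew N s by lra.
rewrite -Msig_abs zsum_sym.
set m := absz (Msig s).
rewrite (@ZS_eq R m _ (fun d => ((d%:~R : R) ^+ (2 * n) * cw N s d ^+ 2) * (Ew N s)^-1));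
  last by move=> d; rewrite cN_sq // mulrA.
rewrite ZS_mulr ler_pdivrMr //.
set K := (2 * n)`!%:R * s ^+ (2 * n) : R.
have K0 : 0 <= K by rewrite /K mulr_ge0 // exprn_ge0 // ltW.
have hz := @ZS_le R m (fun d => (d%:~R : R) ^+ (2 * n) * cw N s d ^+ 2) _
  (fun d => @mom_pt R N s n d s1).
apply: (le_trans hz).
rewrite (@ZS_eq R m _ (fun d => (cw N s d ^+ 2 * expR 4 + expR (- (`|(d%:~R : R)| / s))) * K));
  last by move=> d; rewrite /K; ring.
rewrite ZS_mulr ZS_add ZS_mulr -/(Ew N s).
have hG := @G_le R s m s1.
have : Ew N s * expR 4 + ZS m (fun d : int => expR (- (`|(d%:~R : R)| / s)))
       <= (expR 4 + 18) * Ew N s by lra.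
move=> h.
have -> : (2 * n)`!%:R * (expR 4 + 18) * s ^+ (2 * n) * Ew N s = ((expR 4 + 18) * Ew N s) * K
  by rewrite /K; ring.
by rewrite ler_wpM2r.
Qed.

Lemma cN_neg {R : realType} N (s : R) d : cN N s (- d) = cN N s d.
Proof. by rewrite /cN cw_neg. Qed.

Lemma odd_pow_neg {R : realType} (x : R) n : (- x) ^+ (2 * n + 1) = - x ^+ (2 * n + 1).
Proof. by rewrite addn1 !exprS exprM sqrrN -exprM mulNr. Qed.

Lemma part1_odd {R : realType} N (s : R) (n : nat) :
  zsum (- Msig s) (Msig s) (fun d => (d%:~R : R) ^+ (2 * n + 1) * `|cN N s d| ^+ 2) = 0.
Proof.
rewrite -Msig_abs zsum_sym /ZS big1 ?addr0.
  by rewrite expr0n addn1 /= mul0r.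
move=> i _; rewrite cN_neg intrN.
by rewrite odd_pow_neg mulNr addrN.
Qed.

Lemma ZS_mono {R : realType} (L L' : nat) (F : int -> R) :
  (forall d, 0 <= F d) -> (L <= L')%N -> ZS L F <= ZS L' F.
Proof.
move=> hF /subnK <-; elim: (L' - L)%N => [|k IH]; first by rewrite add0n.
apply: (le_trans IH).
rewrite addSn [X in _ <= X]/ZS big_ord_recr /= addrA -/(ZS _ F) lerDl.
by rewrite addr_ge0.
Qed.

Lemma shift_le_nat {R : realType} N (s : R) (t : nat) :
  ZS (absz (Msig s)) (fun d => cw N s (d + t%:Z) ^+ 2) <= Ew N s.
Proof.
set m := absz (Msig s).
have hm : Msig s = m%:Z by rewrite Msig_abs.
have h1 := @ZS_mono R m (m + t)%N (fun d => cw N s (d + t%:Z) ^+ 2)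
  (fun d => sqr_ge0 _) (leq_addr t m).
apply: (le_trans h1).
rewrite (@ZS_shift R (m + t) t (fun d => cw N s d ^+ 2)).
- rewrite /Ew (@ZS_ext R m (m + t)%N) //; last by lia.
  by move=> d hd; rewrite cw_out ?expr0n // hm.
- by move=> d hd; rewrite cw_out ?expr0n // hm -?abszE; lia.
- by move=> d hd; rewrite cw_out ?expr0n // hm -?abszE; lia.
Qed.

Lemma shift_le {R : realType} N (s : R) (k : int) :
  ZS (absz (Msig s)) (fun d => cw N s (d + k) ^+ 2) <= Ew N s.
Proof.
case: (lerP 0 k) => hk.
  by rewrite -(gez0_abs hk); exact: shift_le_nat.
have -> : k = - (absz k)%:Z by rewrite ltz0_abs ?opprK.
rewrite -(ZS_neg (absz (Msig s))) /=.
rewrite (@ZS_eq R _ _ (fun d => cw N s (d + (absz k)%:Z) ^+ 2)).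
  exact: shift_le_nat.
by move=> d; rewrite -opprD cw_neg.
Qed.

Definition Af {R : realType} N (s j : R) (d : int) : R :=
  if inS N s d then expR (- (d%:~R + j) ^+ 2 / (2 * s ^+ 2)) else 0.

Definition Bf {R : realType} N (s j : R) (d : int) : R :=
  if inS N s d && (s ^+ 2 < `|d%:~R + 2 * j|) then expR (- (d%:~R + j) ^+ 2 / (2 * s ^+ 2)) else 0.

Lemma intr_shift {R : realType} (d k : int) : ((d + k * 2)%:~R : R) = d%:~R + 2 * k%:~R.
Proof. by rewrite intrD intrM mulrC. Qed.

Lemma prod_lb {R : realType} N (s : R) (d k : int) : 0 < s ->
  expR (- (k%:~R) ^+ 2 / (2 * s ^+ 2)) * (Af N s k%:~R d - Bf N s k%:~R d)
  <= cw N s d * cw N s (d + k * 2).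
Proof.
move=> s0; rewrite /Af /Bf !cwE.
case hS: (inS N s d); last by rewrite /= subrr mulr0 mul0r.
have hS' : inS N s (d + k * 2) = (`|(d%:~R : R) + 2 * k%:~R| <= s ^+ 2).
  have hp : (2 %| (N%:Z + (d + k * 2)))%Z.
    by move: hS; rewrite /inS => /andP [h _]; lia.
  by rewrite /inS hp /= intr_norm intr_shift.
rewrite hS' /= intr_shift.
case: (lerP `|(d%:~R : R) + 2 * k%:~R| (s ^+ 2)) => h.
  rewrite subr0 -!expRD ler_expR le_eqVlt; apply/orP; left; apply/eqP.
  by field; rewrite gt_eqF.
by rewrite subrr mulr0 mulr0.
Qed.

Lemma exp_pair {R : realType} (s x j : R) : 0 < s ->
  2 * expR (- j ^+ 2 / (2 * s ^+ 2)) * expR (- x ^+ 2 / (2 * s ^+ 2)) <=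
  expR (- (x + j) ^+ 2 / (2 * s ^+ 2)) + expR (- (x + - j) ^+ 2 / (2 * s ^+ 2)).
Proof.
move=> s0.
set u := x * j / s ^+ 2.
set P := expR (- j ^+ 2 / (2 * s ^+ 2)) * expR (- x ^+ 2 / (2 * s ^+ 2)).
have e1 : expR (- (x + j) ^+ 2 / (2 * s ^+ 2)) = P * expR (- u).
  by rewrite /P -!expRD; congr expR; rewrite /u; field; rewrite gt_eqF.
have e2 : expR (- (x + - j) ^+ 2 / (2 * s ^+ 2)) = P * expR u.
  by rewrite /P -!expRD; congr expR; rewrite /u; field; rewrite gt_eqF.
rewrite e1 e2.
have P0 : 0 <= P by rewrite /P mulr_ge0 // expR_ge0.
have := expR_ge1Dx u; have := expR_ge1Dx (- u).
rewrite /P -mulrA -/P; nra.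
Qed.

Lemma A_lb {R : realType} N (s j : R) : 0 < s ->
  expR (- j ^+ 2 / (2 * s ^+ 2)) * Ew N s <= ZS (absz (Msig s)) (Af N s j).
Proof.
move=> s0; set m := absz (Msig s).
have hA : ZS m (Af N s (- j)) = ZS m (Af N s j).
  rewrite -(ZS_neg m (Af N s j)); apply: ZS_eq => d.
  rewrite /Af inS_neg; case: ifP => // _; congr expR.
  by rewrite intrN; congr (- _ / _); rewrite -sqrrN; congr (_ ^+ 2); ring.
have h : ZS m (fun d => cw N s d ^+ 2 * (2 * expR (- j ^+ 2 / (2 * s ^+ 2))))
         <= ZS m (fun d => Af N s j d + Af N s (- j) d).
  apply: ZS_le => d; rewrite cw_sq // /Af.
  case: ifP => _; last by rewrite mul0r addr0.
  rewrite /gs; have := @exp_pair R s (d%:~R) j s0; lra.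
move: h; rewrite ZS_mulr ZS_add hA -/(Ew N s).
set a := expR _; lra.
Qed.

Lemma B_le {R : realType} N (s j : R) (d : int) : 0 < s -> 2 * `|j| <= s ^+ 2 ->
  Bf N s j d <= expR (- s ^+ 2 / 8).
Proof.
move=> s0 hj; rewrite /Bf; case: ifP => [/andP [_ h] | _]; last exact: expR_ge0.
set x : R := d%:~R in h *.
have t : `|x + 2 * j| <= `|x + j| + `|j|.
  by rewrite (_ : x + 2 * j = (x + j) + j); [exact: ler_normD | ring].
set n := `|x + j| in t.
have n2 : (x + j) ^+ 2 = n ^+ 2 by rewrite /n real_normK // num_real.
have nge : s ^+ 2 / 2 <= n by lra.
have s2 : 0 < s ^+ 2 by rewrite exprn_gt0.
rewrite ler_expR !mulNr lerN2 ler_pdivlMr; last by rewrite mulr_gt0.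
rewrite n2.
have : (s ^+ 2 / 2) ^+ 2 <= n ^+ 2 by rewrite ler_sqr ?nnegrE //; lra.
nra.
Qed.

Lemma tail_bound {R : realType} (s : R) : 1 <= s ->
  s ^+ 2 * (s ^+ 2 * expR (- s ^+ 2 / 8)) <= 256.
Proof.
move=> s1; set y := s ^+ 2.
have y1 : 1 <= y by rewrite /y expr_ge1 //; lra.
have e : expR (y / 8) = expR (y / 16) ^+ 2.
  by rewrite -expRM_natl; congr expR; rewrite /=; field.
have h1 : y / 16 <= expR (y / 16) by have := expR_ge1Dx (y / 16); lra.
have h2 : (y / 16) ^+ 2 <= expR (y / 8) by rewrite e; nra.
have h3 : expR (- y / 8) * expR (y / 8) = 1.
  by rewrite -expRD mulNr addNr expR0.
have h4 : 0 <= expR (- y / 8) by exact: expR_ge0.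
have : y * y / 256 <= expR (y / 8) by move: h2; rewrite expr2; lra.
nra.
Qed.

Lemma amgm {R : realType} (a b : R) : a * b <= (a ^+ 2 + b ^+ 2) * (1 / 2).
Proof. have := sqr_ge0 (a - b); nra. Qed.

Lemma floor_shift {R : realType} (s : R) (k : int) :
  Num.floor (s ^+ 2 - (k * 2)%:~R) = Msig s - k * 2.
Proof.
by rewrite -intrN floorDrz ?intr_int // intrKfloor.
Qed.

Lemma part2 {R : realType} N (s : R) (k : int) : 1 <= s ->
  `| zsum (- Msig s) (Num.floor (s ^+ 2 - (k * 2)%:~R))
       (fun d => cN N s d * cN N s (d + k * 2)) - 1 |
   <= ((k%:~R) ^+ 2 + 4608 + 4 * `|(k%:~R : R)| + 4) / s ^+ 2.
Proof.
move=> s1; have s0 : 0 < s by lra.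
have hE := @E_lb R N s s1.
have E0 : 0 < Ew N s by lra.
rewrite floor_shift.
have hz : zsum (- Msig s) (Msig s - k * 2) (fun d => cN N s d * cN N s (d + k * 2)) =
          zsum (- Msig s) (Msig s) (fun d => cN N s d * cN N s (d + k * 2)).
  apply: zsum_ext.
  - by apply: (le_trans _ (Msig_ge0 s)); rewrite oppr_le0; exact: Msig_ge0.
  - move=> d _ hd; rewrite /cN (@cw_out R N s (d + k * 2)) ?mulr0 // -?abszE.
    by move: hd; generalize (Msig s) => M hd; lia.
  - move=> d _ hd; rewrite /cN (@cw_out R N s d) ?mulr0 ?mul0r // -?abszE.
    by move: hd; generalize (Msig s) => M hd; lia.
rewrite hz.
rewrite -Msig_abs zsum_sym.
set m := absz (Msig s).
rewrite (@ZS_eq R m _ (fun d => (cw N s d * cw N s (d + k * 2)) * (Ew N s)^-1));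
  last by move=> d; rewrite cN_mul.
rewrite ZS_mulr.
set X := ZS m (fun d => cw N s d * cw N s (d + k * 2)).
set E := Ew N s.
have hX0 : 0 <= X.
  rewrite /X (_ : 0 = ZS m (fun _ => 0)); last by rewrite ZS_const mulr0.
  by apply: ZS_le => d; rewrite mulr_ge0 // cw_ge0.
have hXE : X <= E.
  have h := @ZS_le R m (fun d => cw N s d * cw N s (d + k * 2))
     (fun d => (cw N s d ^+ 2 + cw N s (d + k * 2) ^+ 2) * (1 / 2))
     (fun d => amgm _ _).
  have eE : ZS m (fun d => cw N s d ^+ 2) = E by [].
  move: h; rewrite ZS_mulr ZS_add eE -/X.
  have hs : ZS m (fun d => cw N s (d + k * 2) ^+ 2) <= E := @shift_le R N s (k * 2).
  lra.
have hXE' : X / E <= 1 by rewrite ler_pdivrMr // mul1r.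
have hXE0 : 0 <= X / E by rewrite divr_ge0 // ltW.
rewrite ler0_norm; last by lra.
rewrite opprB.
set jr : R := k%:~R.
have s2 : 0 < s ^+ 2 by rewrite exprn_gt0.
have s21 : 1 <= s ^+ 2 by rewrite expr_ge1 //; lra.
set w := 1 / s ^+ 2.
have w0 : 0 < w by rewrite /w divr_gt0.
have ws : w * s ^+ 2 = 1 by rewrite /w mul1r mulVf // gt_eqF.
rewrite (_ : (jr ^+ 2 + 4608 + 4 * `|jr| + 4) / s ^+ 2 = (jr ^+ 2 + 4608 + 4 * `|jr| + 4) * w);
  last by rewrite /w mul1r.
have hj0 : 0 <= `|jr| by [].
case: (lerP (4 * `|jr| + 4) (s ^+ 2)) => hs; last first.
  have : 1 <= (4 * `|jr| + 4) * w by nra.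
  have := sqr_ge0 jr; nra.
set a := expR (- jr ^+ 2 / (2 * s ^+ 2)).
have a0 : 0 <= a by exact: expR_ge0.
have a1 : a <= 1 by rewrite expR_le1 mulNr oppr_le0 divr_ge0 // ?sqr_ge0 // mulr_ge0 // ltW.
have pt : forall d, (Af N s jr d + Bf N s jr d * (-1)) * a <= cw N s d * cw N s (d + k * 2).
  by move=> d; rewrite mulrC mulrN1; exact: (@prod_lb R N s d k s0).
have F1 := @ZS_le R m (fun d => (Af N s jr d + Bf N s jr d * (-1)) * a)
  (fun d => cw N s d * cw N s (d + k * 2)) pt.
rewrite ZS_mulr ZS_add ZS_mulr -/X in F1.
have F2 := @A_lb R N s jr s0; rewrite -/a -/E -/m in F2.
set ZB := ZS m (Bf N s jr) in F1.
have e8 : 0 <= expR (- s ^+ 2 / 8) by exact: expR_ge0.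
have F3 : ZB <= 3 * s ^+ 2 * expR (- s ^+ 2 / 8).
  have h := @ZS_le R m (Bf N s jr) (fun _ => expR (- s ^+ 2 / 8))
    (fun d => @B_le R N s jr d s0 ltac:(lra)).
  rewrite ZS_const in h; apply: (le_trans h).
  have hm : (m%:R : R) <= s ^+ 2.
    have -> : (m%:R : R) = (Msig s)%:~R by rewrite -Msig_abs -pmulrn.
    exact: floor_le.
  rewrite natrD natrM /=.
  have : ((2 * m)%:R + 1 : R) <= 3 * s ^+ 2 by rewrite natrM; lra.
  rewrite -natrM; nra.
have ZB0 : 0 <= ZB.
  rewrite /ZB (_ : 0 = ZS m (fun _ => 0)); last by rewrite ZS_const mulr0.
  by apply: ZS_le => d; rewrite /Bf; case: ifP => _ //; exact: expR_ge0.
have F4 := @tail_bound R s s1.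
have F5 : 1 - jr ^+ 2 * w <= a * a.
  rewrite -expRD.
  have -> : - jr ^+ 2 / (2 * s ^+ 2) + - jr ^+ 2 / (2 * s ^+ 2) = - (jr ^+ 2 * w).
    by rewrite /w; field; rewrite gt_eqF.
  exact: expR_ge1Dx.
have G1 : a * (a * E) - ZB <= X.
  have : a * E * a <= ZS m (Af N s jr) * a by rewrite ler_wpM2r.
  have : a * ZB <= ZB by rewrite ler_piMl.
  lra.
have G2 : ZB <= 768 * w.
  have h1 : ZB * s ^+ 2 <= 3 * s ^+ 2 * expR (- s ^+ 2 / 8) * s ^+ 2 by rewrite ler_wpM2r // ltW.
  have h2 : ZB * s ^+ 2 <= 768 by lra.
  have -> : ZB = ZB * s ^+ 2 * w by rewrite -mulrA [_ * w]mulrC ws mulr1.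
  by rewrite ler_wpM2r // ltW.
have E16 : 1 / 6 <= E by rewrite /E; lra.
have G3 : E - X <= (jr ^+ 2 + 4608) * w * E.
  have : a * a * E >= (1 - jr ^+ 2 * w) * E by rewrite ler_wpM2r // ltW.
  have : 768 * w <= 4608 * w * E by nra.
  lra.
have -> : 1 - X / E = (E - X) / E by field; rewrite gt_eqF.
rewrite ler_pdivrMr //.
apply: (le_trans G3).
have t1 : 0 <= 4 * `|jr| + 4 by lra.
have t2 : 0 <= (4 * `|jr| + 4) * w by apply: mulr_ge0 => //; exact: ltW.
have t3 : 0 <= (4 * `|jr| + 4) * w * E by apply: mulr_ge0 => //; rewrite /E ltW.
lra.
Qed.

Theorem lemma4p5 (R : realType) (C : R) :
  (forall n : nat, exists Cn : R, forall (N : nat) (s : R),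
      (1 <= N)%N -> 1 <= s -> s <= C * Num.sqrt (N%:R) ->
      zsum (- Msig s) (Msig s)
        (fun d => (d%:~R : R) ^+ (2 * n) * `|cN N s d| ^+ 2) <= Cn * s ^+ (2 * n)
      /\ zsum (- Msig s) (Msig s)
        (fun d => (d%:~R : R) ^+ (2 * n + 1) * `|cN N s d| ^+ 2) = 0)
  /\
  (forall kappa : int, (2 %| kappa)%Z -> exists C' : R, forall (N : nat) (s : R),
      (1 <= N)%N -> 1 <= s -> s <= C * Num.sqrt (N%:R) ->
      `| zsum (- Msig s) (Num.floor (s ^+ 2 - kappa%:~R))
            (fun d => cN N s d * cN N s (d + kappa)) - 1 | <= C' / s ^+ 2).
Proof.
split.
  move=> n; exists ((2 * n)`!%:R * (expR 4 + 18)) => N s _ s1 _; split.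
    exact: part1.
  exact: part1_odd.
move=> kappa /dvdzP [k ->].
exists ((k%:~R) ^+ 2 + 4608 + 4 * `|(k%:~R : R)| + 4) => N s _ s1 _.
exact: part2.
Qed.
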